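(* For a large scale group $G$ the following are equivalent: (1) the large scale structure of $G$ is induced by a metric; (2) the bornology of $G$ has a countable basis; (3) there is a left-invariant metric $d$ on $G$ inducing the large scale structure of $G$.
   Context: A bornology on a set is a cover closed under subsets and finite unions; a basis of a bornology $\mathcal B$ is a subfamily such that every member of $\mathcal B$ is contained in a member of the subfamily. A large scale group is a group $G$ with a bornology $\mathcal B$ closed under inverses and products; its uniformly bounded covers are those refining $\{gB\}_{g\in G}$ for some $B\in\mathcal B$. A metric $d$ induces the large scale structure whose uniformly bounded covers are those covers refining, for some $r>0$, the family of all sets of $d$-diameter at most $r$. $d$ is left-invariant if $d(gx,gy)=d(x,y)$ for all $g,x,y\in G$. *)

(* Defs.v *)
From mathcomp Require Import all_boot.
From mathcomp Require Import boolp classical_sets cardinality.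
From Stdlib Require Import Reals.

Set Implicit Arguments.
Unset Strict Implicit.
Unset Printing Implicit Defensive.

Local Open Scope classical_set_scope.

Record Grp := MkGrp {
  gcar :> Type;
  gmul : gcar -> gcar -> gcar;
  ginv : gcar -> gcar;
  gone : gcar;
  gmulA : forall x y z, gmul x (gmul y z) = gmul (gmul x y) z;
  gmul1l : forall x, gmul gone x = x;
  gmulVl : forall x, gmul (ginv x) x = gone
}.

Definition is_cover (T : Type) (U : set (set T)) : Prop :=
  forall x : T, exists A, U A /\ A x.

Definition refines (T : Type) (U V : set (set T)) : Prop :=
  forall A, U A -> exists A', V A' /\ A `<=` A'.

Definition is_bornology (T : Type) (B : set (set T)) : Prop :=
  [/\ is_cover B,
      (forall A A', B A -> A' `<=` A -> B A') &
      (forall A A', B A -> B A' -> B (A `|` A'))].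

Definition is_basis (T : Type) (B C : set (set T)) : Prop :=
  C `<=` B /\ forall A, B A -> exists A', C A' /\ A `<=` A'.

Definition set_inv (G : Grp) (A : set G) : set G :=
  [set z | exists a, A a /\ z = ginv a].

Definition set_mul (G : Grp) (A A' : set G) : set G :=
  [set z | exists a b, [/\ A a, A' b & z = gmul a b]].

Definition lcoset (G : Grp) (g : G) (A : set G) : set G :=
  [set z | exists a, A a /\ z = gmul g a].

Definition large_scale_group (G : Grp) (B : set (set G)) : Prop :=
  [/\ is_bornology B,
      (forall A, B A -> B (set_inv A)) &
      (forall A A', B A -> B A' -> B (set_mul A A'))].

Definition group_ub (G : Grp) (B : set (set G)) (U : set (set G)) : Prop :=
  is_cover U /\
  exists A, B A /\ refines U [set S | exists g : G, S = lcoset g A].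

Definition is_metric (T : Type) (d : T -> T -> R) : Prop :=
  [/\ forall x y, (0 <= d x y)%R,
      forall x y, d x y = 0%R <-> x = y,
      forall x y, d x y = d y x &
      forall x y z, (d x z <= d x y + d y z)%R].

Definition diam_le (T : Type) (d : T -> T -> R) (r : R) : set (set T) :=
  [set S | forall x y, S x -> S y -> (d x y <= r)%R].

Definition metric_ub (T : Type) (d : T -> T -> R) (U : set (set T)) : Prop :=
  is_cover U /\ exists r : R, (0 < r)%R /\ refines U (diam_le d r).

Definition induces_ls (G : Grp) (B : set (set G)) (d : G -> G -> R) : Prop :=
  forall U : set (set G), group_ub B U <-> metric_ub d U.

Definition left_invariant (G : Grp) (d : G -> G -> R) : Prop :=
  forall g x y : G, d (gmul g x) (gmul g y) = d x y.

(* Main.v *)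
Require Import Defs.
From mathcomp Require Import all_boot.
From mathcomp Require Import boolp classical_sets cardinality.
From Stdlib Require Import Reals Lra.
From mathcomp Require Import zify.

Set Implicit Arguments.
Unset Strict Implicit.
Unset Printing Implicit Defensive.
Local Open Scope classical_set_scope.

Section GrpLemmas.
Lemma gmulV (G : Grp) (x : G) : gmul x (ginv x) = (gone _).
Proof.
set y := ginv x.
rewrite -[gmul x y]gmul1l -(gmulVl y) -gmulA [gmul y (gmul x y)]gmulA.
by rewrite /y gmulVl gmul1l.
Qed.

Lemma gmul1r (G : Grp) (x : G) : gmul x (gone _) = x.
Proof. by rewrite -(gmulVl x) gmulA gmulV gmul1l. Qed.

Lemma ginv_uniq (G : Grp) (a b : G) : gmul a b = (gone _) -> a = ginv b.
Proof.
move=> H; by rewrite -[a]gmul1r -(gmulV b) gmulA H gmul1l.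
Qed.

Lemma ginvK (G : Grp) (x : G) : ginv (ginv x) = x.
Proof. by symmetry; apply: ginv_uniq; rewrite gmulV. Qed.

Lemma ginvM (G : Grp) (x y : G) : ginv (gmul x y) = gmul (ginv y) (ginv x).
Proof.
symmetry; apply: ginv_uniq.
by rewrite -gmulA [gmul (ginv x) _]gmulA gmulVl gmul1l gmulVl.
Qed.

Lemma gmulKV (G : Grp) (x y : G) : gmul (ginv x) (gmul x y) = y.
Proof. by rewrite gmulA gmulVl gmul1l. Qed.

Lemma gmulVK (G : Grp) (x y : G) : gmul x (gmul (ginv x) y) = y.
Proof. by rewrite gmulA gmulV gmul1l. Qed.
End GrpLemmas.

Lemma lsg_sing (G : Grp) (B : set (set G)) x : large_scale_group B -> B [set x].
Proof.
case=> [[Bc Bs Bu] _ _]; have [A [BA Ax]] := Bc x.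
by apply: (Bs A) => // y ->.
Qed.

Lemma lsg_sub (G : Grp) (B : set (set G)) A A' : large_scale_group B -> B A -> A' `<=` A -> B A'.
Proof. by case=> [[_ Bs _] _ _]; apply: Bs. Qed.

Lemma lsg_union (G : Grp) (B : set (set G)) A A' : large_scale_group B -> B A -> B A' -> B (A `|` A').
Proof. by case=> [[_ _ Bu] _ _]; apply: Bu. Qed.

Lemma lsg_mul (G : Grp) (B : set (set G)) A A' : large_scale_group B -> B A -> B A' -> B (set_mul A A').
Proof. by case=> _ _ H; apply: H. Qed.

Lemma lsg_inv (G : Grp) (B : set (set G)) A : large_scale_group B -> B A -> B (set_inv A).
Proof. by case=> _ H _; apply: H. Qed.

Lemma lsg_coset (G : Grp) (B : set (set G)) g A : large_scale_group B -> B A -> B (lcoset g A).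
Proof.
move=> L BA; apply: (lsg_sub L (lsg_mul L (lsg_sing g L) BA)).
by move=> z [a [Aa ->]]; exists g, a.
Qed.

Lemma nat_above (r : R) : exists n : nat, (r <= INR n)%R.
Proof.
have [n Hn] := INR_archimed 1 r Rlt_0_1; exists n; lra.
Qed.

Lemma one_two (G : Grp) (B : set (set G)) (d : G -> G -> R) :
  large_scale_group B -> is_metric d -> induces_ls B d ->
  exists C : set (set G), is_basis B C /\ countable C.
Proof.
move=> L [d0 deq dsym dtri] Ind.
pose ball (n : nat) := [set x : G | (d (gone _) x <= INR n)%R].
have Bball : forall n, B (ball n).
  move=> n.
  pose U := [set S | S = ball n \/ exists x, S = [set x]].
  have : metric_ub d U.
    split; first by move=> x; exists [set x]; split=> //; right; exists x.
    exists (2 * INR n + 1)%R; split; first by have := pos_INR n; lra.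
    move=> S [->|[x ->]]; [exists (ball n) | exists [set x]]; split=> //.
      move=> x y Hx Hy; have := dtri x (gone _) y; rewrite (dsym x (gone _)).
      rewrite /ball /= in Hx Hy; lra.
    move=> y z -> ->; have := (proj2 (deq x x) erefl); have := pos_INR n; lra.
  move=> /Ind [_ [A [BA Uref]]].
  have [_ [[g ->] sub]] := Uref (ball n) (or_introl erefl).
  exact: lsg_sub L (lsg_coset g L BA) sub.
exists (range ball); split; last first.
  rewrite /countable; apply: card_le_trans (card_image_le ball setT) _.
  exact: card_lexx.
split; first by move=> S [n _ <-].
move=> A BA.
pose A' := A `|` [set (gone _)].
have BA' : B A' by apply: lsg_union L BA (lsg_sing (gone _) L).
pose U := [set S | S = A' \/ exists x, S = [set x]].
have : group_ub B U.
  split; first by move=> x; exists [set x]; split=> //; right; exists x.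
  exists A'; split=> //.
  move=> S [->|[x ->]].
    exists (lcoset (gone _) A'); split; first by exists (gone _).
    by move=> z Hz; exists z; rewrite gmul1l.
  exists (lcoset x A'); split; first by exists x.
  by move=> z ->; exists (gone _); rewrite gmul1r; split=> //; right.
move=> /Ind [_ [r [rpos Uref]]].
have [S [HS sub]] := Uref A' (or_introl erefl).
have [n Hn] := nat_above r.
exists (ball n); split; first by exists n.
move=> a Aa; rewrite /ball /=.
have := HS (gone _) a (sub _ (or_intror erefl)) (sub _ (or_introl Aa)); lra.
Qed.

Fixpoint Kset (G : Grp) (f : nat -> set G) (m : nat) : set G :=
  match m with
  | 0 => [set gone G] `|` f 0 `|` set_inv (f 0)
  | m'.+1 => Kset f m' `|` f m'.+1 `|` set_inv (f m'.+1)
  end.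

Inductive reach (G : Grp) (K : nat -> set G) : nat -> G -> Prop :=
| reach0 : reach K 0 (gone G)
| reachS : forall n m s g, K m s -> reach K n g -> reach K (n + m.+1) (gmul s g).

Lemma reach_mul (G : Grp) (K : nat -> set G) n m g h :
  reach K n g -> reach K m h -> reach K (n + m) (gmul g h).
Proof.
move=> R1 R2; elim: R1 => [|n' m' s g' Ks _ IH]; first by rewrite gmul1l.
have -> : n' + m'.+1 + m = (n' + m) + m'.+1 by lia.
rewrite -gmulA; exact: reachS.
Qed.

Lemma reach_single (G : Grp) (K : nat -> set G) m s : K m s -> reach K m.+1 s.
Proof. move=> Ks; rewrite -[s]gmul1r -[m.+1]add0n; exact: reachS (reach0 K). Qed.

Lemma reach_inv (G : Grp) (K : nat -> set G) n g :
  (forall m x, K m x -> K m (ginv x)) -> reach K n g -> reach K n (ginv g).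
Proof.
move=> Ksym; elim=> [|n' m' s g' Ks _ IH].
  by rewrite -[ginv _]gmul1r gmulVl; exact: reach0.
rewrite ginvM; apply: reach_mul IH _; exact/reach_single/Ksym.
Qed.

Lemma reach0_eq (G : Grp) (K : nat -> set G) n g : reach K n g -> n = 0 -> g = gone G.
Proof. by case=> // n' m s g' _ _; lia. Qed.

Definition Qset (G : Grp) (K : nat -> set G) (k : nat) : set G :=
  [set g | exists j, j <= k /\ reach K j g].

Lemma Qset_sub (G : Grp) (K : nat -> set G) k :
  (forall m m', m <= m' -> K m `<=` K m') ->
  Qset K k.+1 `<=` Qset K k `|` set_mul (K k) (Qset K k).
Proof.
move=> Kmono g [j [jle Rj]].
have [jlek|] := leqP j k; first by left; exists j.
move=> kj; have ej : j = k.+1 by lia.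
case: Rj ej jle kj => [|n m s g' Ks Rg] ej jle kj; first by lia.
right; exists s, g'; split=> //.
  apply: (Kmono m) => //; lia.
by exists n; split=> //; lia.
Qed.

Lemma Qset_B (G : Grp) (B : set (set G)) (K : nat -> set G) :
  large_scale_group B -> (forall m, B (K m)) ->
  (forall m m', m <= m' -> K m `<=` K m') -> forall k, B (Qset K k).
Proof.
move=> L KB Kmono; elim=> [|k IH].
  apply: lsg_sub L (lsg_sing (gone G) L) _.
  by move=> g [j [jle Rj]]; apply: reach0_eq Rj _; lia.
apply: lsg_sub L (lsg_union L IH (lsg_mul L (KB k) IH)) _.
exact: Qset_sub.
Qed.

Lemma K_metric (G : Grp) (B : set (set G)) (K : nat -> set G) :
  large_scale_group B -> (forall m, B (K m)) ->
  (forall m m', m <= m' -> K m `<=` K m') ->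
  (forall m x, K m x -> K m (ginv x)) ->
  (forall g, exists m, K m g) ->
  (forall A, B A -> exists m, A `<=` K m) ->
  exists d : G -> G -> R, [/\ is_metric d, left_invariant d & induces_ls B d].
Proof.
move=> L KB Kmono Ksym Kcov Kbas.
have hlen : forall g, exists n, reach K n g /\ forall m, reach K m g -> n <= m.
  move=> g; have [m Km] := Kcov g.
  have ex : exists n, `[< reach K n g >] by exists m.+1; apply/asboolP; exact: reach_single.
  case: (ex_minnP ex) => n /asboolP Rn Hmin; exists n; split=> // j Rj.
  by apply: Hmin; apply/asboolP.
have [len lenP] := choice hlen.
have lenR g : reach K (len g) g by case: (lenP g).
have lenM g j : reach K j g -> len g <= j by case: (lenP g) => _; apply.
have len0 g : len g = 0 <-> g = gone G.
  split; first by move=> e; apply: reach0_eq (lenR g) e.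
  move=> ->; have := lenM _ _ (reach0 K); lia.
have lenV g : len (ginv g) = len g.
  have H x : len (ginv x) <= len x by apply: lenM; apply: reach_inv.
  have := H g; have := H (ginv g); rewrite ginvK; lia.
have lenMul g h : len (gmul g h) <= len g + len h.
  by apply: lenM; apply: reach_mul.
have leR a b : a <= b -> (INR a <= INR b)%R by move=> ab; apply: le_INR; apply/leP.
exists (fun x y => INR (len (gmul (ginv x) y))); split.
- split.
  + move=> x y; exact: pos_INR.
  + move=> x y; split.
      move=> e; have : len (gmul (ginv x) y) = 0 by apply: INR_eq; rewrite e.
      by move/len0 => e2; rewrite -[y](gmulVK x) e2 gmul1r.
    by move=> ->; rewrite gmulVl; have [_ ->] := len0 (gone G).
  + by move=> x y; rewrite -lenV ginvM ginvK.
  + move=> x y z; rewrite -plus_INR; apply: leR.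
    have -> : gmul (ginv x) z = gmul (gmul (ginv x) y) (gmul (ginv y) z).
      by rewrite -gmulA gmulVK.
    exact: lenMul.
- by move=> g x y /=; rewrite ginvM -gmulA gmulKV.
- move=> U; split.
  + move=> [Ucov [A [BA Uref]]]; split=> //.
    have [m Am] := Kbas A BA.
    have lenA a : A a -> len a <= m.+1 by move=> Aa; apply: lenM; apply: reach_single; apply: Am.
    exists (INR (m.+1 + m.+1)); split; first by apply: lt_0_INR; apply/ltP.
    move=> S US; have [_ [[g ->] sub]] := Uref S US.
    exists (lcoset g A); split=> //.
    move=> x y [a [Aa ->]] [b [Ab ->]]; apply: leR.
    rewrite ginvM -gmulA gmulKV.
    apply: leq_trans (lenMul _ _) _; rewrite lenV.
    have := lenA a Aa; have := lenA b Ab; lia.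
  + move=> [Ucov [r [rpos Uref]]]; split=> //.
    have [n Hn] := nat_above r.
    exists (Qset K n); split; first exact: Qset_B.
    move=> S US; have [S' [HS' sub]] := Uref S US.
    have [[x Sx]|nS] := pselect (exists x, S x).
      exists (lcoset x (Qset K n)); split; first by exists x.
      move=> y Sy; exists (gmul (ginv x) y); split; last by rewrite gmulVK.
      exists (len (gmul (ginv x) y)); split=> //.
      have := HS' x y (sub _ Sx) (sub _ Sy) => H.
      apply/leP; apply: INR_le; lra.
    exists (lcoset (gone G) (Qset K n)); split; first by exists (gone G).
    by move=> y Sy; exfalso; apply: nS; exists y.
Qed.

Lemma two_three (G : Grp) (B : set (set G)) :
  large_scale_group B -> (exists C : set (set G), is_basis B C /\ countable C) ->
  exists d : G -> G -> R, [/\ is_metric d, left_invariant d & induces_ls B d].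
Proof.
move=> L [C [[CB Cbas] Cc]].
have [g gs] := (elimT (@pcard_surjP (set G) nat C setT)) Cc.
have [f [fB fC]] : exists f : nat -> set G,
    (forall n, B (f n)) /\ (forall A, C A -> exists n, f n = A).
  exists (fun n => if pselect (B (g n)) then g n else set0); split.
    move=> n; destruct (pselect (B (g n))) as [Bg|nBg]; first done.
    by apply: lsg_sub L (lsg_sing (gone G) L) _.
  move=> A CA; have [n _ gn] := gs A CA; exists n.
  destruct (pselect (B (g n))) as [Bg|nB]; first done.
  by exfalso; apply: nB; rewrite gn; apply: CB.
have KB m : B (Kset f m).
  elim: m => [|m IH] /=.
    exact: lsg_union L (lsg_union L (lsg_sing _ L) (fB 0)) (lsg_inv L (fB 0)).
  exact: lsg_union L (lsg_union L IH (fB _)) (lsg_inv L (fB _)).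
have fK n : f n `<=` Kset f n.
  by case: n => [|n] x fx /=; left; right.
have Kstep m : Kset f m `<=` Kset f m.+1 by move=> x Kx /=; left; left.
have Kmono m m' : m <= m' -> Kset f m `<=` Kset f m'.
  move=> le; elim: m' le => [|m' IH] le.
    by have -> : m = 0 by lia.
  have [e|lt] := eqVneq m m'.+1; first by rewrite e.
  move=> x Kx; apply: Kstep; apply: IH => //; lia.
have invS (A : set G) x : (A `|` set_inv A) x -> (A `|` set_inv A) (ginv x).
  case=> [Ax|[a [Aa ->]]]; [right; by exists x | left; by rewrite ginvK].
have Ksym m x : Kset f m x -> Kset f m (ginv x).
  elim: m x => [|m IH] x /=.
    case=> [[e|fx]|ix].
    - by left; left; rewrite e -[ginv _]gmul1r gmulVl.
    - have [y|y] := invS (f 0) x (or_introl fx); [left; right | right] => //.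
    - have [y|y] := invS (f 0) x (or_intror ix); [left; right | right] => //.
  case=> [[Kx|fx]|ix].
  - by left; left; apply: IH.
  - have [y|y] := invS (f m.+1) x (or_introl fx); [left; right | right] => //.
  - have [y|y] := invS (f m.+1) x (or_intror ix); [left; right | right] => //.
apply: (K_metric L KB Kmono Ksym).
  move=> x; have [A [CA sub]] := Cbas _ (lsg_sing x L).
  have [n fn] := fC A CA; exists n; apply: fK; rewrite fn; exact: sub.
move=> A BA; have [A' [CA' sub]] := Cbas _ BA.
have [n fn] := fC A' CA'; exists n; move=> x Ax; apply: fK; rewrite fn; exact: sub.
Qed.

Theorem proposition7p1 (G : Grp) (B : set (set G)) :
  large_scale_group B ->
  ((exists d : G -> G -> R, is_metric d /\ induces_ls B d) <->
   (exists C : set (set G), is_basis B C /\ countable C)) /\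
  ((exists C : set (set G), is_basis B C /\ countable C) <->
   (exists d : G -> G -> R, [/\ is_metric d, left_invariant d & induces_ls B d])).
Proof.
move=> L; split; split.
- by move=> [d [dm di]]; apply: one_two L dm di.
- move=> /(two_three L) [d [dm _ di]]; by exists d.
- exact: two_three.
- by move=> [d [dm _ di]]; apply: one_two L dm di.
Qed.
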